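(* Let $q$ be even and $n\ge1$. If $W$ is an $n$-dimensional Wild subspace over $\mathrm{GF}(q)$, then $\{f(1): f\in W\}=\mathrm{GF}(q^n)$.
   Context: Let $q$ be even. An o-permutation over $\mathrm{GF}(q^n)$ is a function $f:\mathrm{GF}(q^n)\to\mathrm{GF}(q^n)$ with $f(0)=0$ such that, for every $s\in\mathrm{GF}(q^n)$, the map $x\mapsto (f(x+s)+f(s))/x$ is a permutation of $\mathrm{GF}(q^n)\setminus\{0\}$. Let $\mathfrak F$ be the $\mathrm{GF}(q)$-vector space of all functions $f:\mathrm{GF}(q^n)\to\mathrm{GF}(q^n)$ with $f(0)=0$. An $n$-dimensional Wild subspace over $\mathrm{GF}(q)$ is an $n$-dimensional $\mathrm{GF}(q)$-subspace $W$ of $\mathfrak F$ every nonzero element of which is an o-permutation over $\mathrm{GF}(q^n)$. *)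

(* Defs.v *)
From HB Require Import structures.
From mathcomp Require Import all_boot all_order all_algebra all_field.
Set Implicit Arguments. Unset Strict Implicit. Unset Printing Implicit Defensive.
Import GRing.Theory.
Local Open Scope ring_scope.

(* GF(q) is a finite field F (q = #|F|) and GF(q^n) is a field extension L of F
   of dimension n = \dim {:L}.  We use the alias [finvect_type L] to equip L with
   its (finite) finType structure, so that functions L -> L form the
   F-vector space {ffun finvect_type L -> finvect_type L}. *)
Notation fL L := (finvect_type L).

Definition o_permutation (K : fieldType) (f : K -> K) : Prop :=
  f 0 = 0 /\
  forall s : K,
    let g := fun x => (f (x + s) + f s) / x in
    [/\ (forall x, x != 0 -> g x != 0),
        (forall x y, x != 0 -> y != 0 -> g x = g y -> x = y) &
        (forall y, y != 0 -> exists2 x, x != 0 & g x = y)].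

Definition wild_subspace (F : finFieldType) (L : fieldExtType F) (n : nat)
    (W : {vspace {ffun fL L -> fL L}}) : Prop :=
  [/\ \dim W = n,
      (forall f, f \in W -> f 0 = 0) &
      (forall f, f \in W -> f != 0 -> o_permutation (fun x : fL L => f x))].

(* Main.v *)
Require Import Defs.
From HB Require Import structures.
From mathcomp Require Import all_boot all_order all_algebra all_field.
Local Open Scope ring_scope.
Import GRing.Theory.

Section Ev.
Variables (F : finFieldType) (L : fieldExtType F).
Definition ev1 (f : {ffun fL L -> fL L}) : fL L := f 1.
Lemma ev1_lin : linear ev1.
Proof. by move=> a f g; rewrite /ev1 !ffunE. Qed.
HB.instance Definition _ := GRing.isLinear.Build F _ _ _ ev1 ev1_lin.
End Ev.

Theorem corollary1 (F : finFieldType) (L : fieldExtType F) (n : nat)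
    (W : {vspace {ffun fL L -> fL L}}) :
  ~~ odd #|F| ->
  \dim {:L} = n -> (1 <= n)%N ->
  wild_subspace n W ->
  forall y : fL L, exists2 f, f \in W & f 1 = y.
Proof.
move=> _ dimL _ [dimW W0 Wo] y.
pose phi : 'Hom({ffun fL L -> fL L}, fL L) := linfun (@ev1 F L).
have ker0 : (W :&: lker phi = 0)%VS.
  apply/eqP; rewrite -subv0; apply/subvP => f.
  rewrite memv_cap memv_ker memv0 lfunE /ev1 => /andP[fW /eqP f1].
  apply/negPn/negP => fn0.
  have {}f1 : f 1 = 0 by exact: f1.
  have [f00 op] := Wo f fW fn0.
  have [H _ _] := op 0.
  have := H 1 (oner_neq0 _).
  by rewrite addr0 f00 addr0 f1 mul0r eqxx.
have imgW : (phi @: W)%VS = fullv.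
  apply/eqP; rewrite eqEdim subvf /= limg_dim_eq // dimW dimvf -dimL.
  by rewrite dimvf.
have : y \in (phi @: W)%VS by rewrite imgW memvf.
case/memv_imgP => f fW ->; exists f => //.
by rewrite lfunE.
Qed.
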